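(* Let $\alpha\in(0,1)$ and let $\{a_n\}$ be a positive sequence. Suppose there exists $\delta>0$ such that for all $\epsilon>0$ and $\tilde\alpha\in[\alpha-\delta,\alpha+\delta]$, $$\sup_{P\in\mathbf P_0}P\big(c_{n,1-\tilde\alpha}(P)-\epsilon\le I_n\le c_{n,1-\tilde\alpha}(P)+\epsilon\big)\le a_n^{-1}(\epsilon\wedge1)+o(1).$$ (i) If $I_n\le U_{n,P}+o_p(a_n)$ and $\hat U_n\ge U^\star_{n,P}+o_p(a_n)$ uniformly in $P\in\mathbf P_0$, for some $U^\star_{n,P}$ independent of $\{V_i\}_{i=1}^n$ and equal in distribution to $U_{n,P}$, then $\limsup_{n\to\infty}\sup_{P\in\mathbf P_0}P(I_n>\hat c_{n,1-\alpha})\le\alpha$. (ii) If $I_n=U_{n,P}+o_p(a_n)$ and $\hat U_n=U^\star_{n,P}+o_p(a_n)$ uniformly in $P\in\mathbf P_0$, for some $U^\star_{n,P}$ independent of $\{V_i\}_{i=1}^n$ and equal in distribution to $U_{n,P}$, then $\limsup_{n\to\infty}\sup_{P\in\mathbf P_0}|P(I_n>\hat c_{n,1-\alpha})-\alpha|=0$.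
   Context: Data $\{V_i\}_{i=1}^n$ are i.i.d. with law $P$ in a family $\mathbf P_0$; all random variables are defined on a common (possibly enlarged) probability space. $I_n$ is a real statistic computed from the data, $\hat U_n$ a real random variable depending on the data and possibly on auxiliary randomness, and $U_{n,P}$, $U^\star_{n,P}$ real random variables. $c_{n,1-\alpha}(P)\equiv\inf\{u:P(I_n\le u)\ge1-\alpha\}$ and $\hat c_{n,1-\alpha}\equiv\inf\{u:P(\hat U_n\le u\mid\{V_i\}_{i=1}^n)\ge1-\alpha\}$. $X_n=o_p(b_n)$ uniformly in $P\in\mathbf P_0$ means that for every $\epsilon>0$, $\limsup_n\sup_{P\in\mathbf P_0}P(|X_n|>\epsilon b_n)=0$. *)

(* Defs.v *)
From HB Require Import structures.
From mathcomp Require Import all_boot all_order all_algebra.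
From mathcomp Require Import all_classical all_reals all_analysis.
Set Implicit Arguments. Unset Strict Implicit. Unset Printing Implicit Defensive.
Import Order.TTheory GRing.Theory Num.Theory.
Local Open Scope classical_set_scope.
Local Open Scope ring_scope.

Section Defs.
Context {R : realType} {dO dT dW : measure_display}
  {Om : measurableType dO} {T : measurableType dT} {W : measurableType dW}.

(* The data vector (V_1,...,V_n), indexed from 0: [V 0; ...; V (n-1)]. *)
Definition data (V : nat -> Om -> T) (n : nat) (w : Om) : n.-tuple T :=
  [tuple V i w | i < n].

Definition iid_with_law (mu : probability Om R) (V : nat -> Om -> T)
    (P : probability T R) : Prop :=
  (forall i, measurable_fun setT (V i)) /\
  (forall i (B : set T), measurable B -> mu (V i @^-1` B) = P B) /\
  (forall n (B : 'I_n -> set T), (forall i, measurable (B i)) ->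
     mu (\bigcap_(i in [set: 'I_n]) (V i @^-1` B i)) =
     (\prod_(i < n) mu (V i @^-1` B i))%E).

Definition indep {dA dB} {A : measurableType dA} {B : measurableType dB}
    (mu : probability Om R) (X : Om -> A) (Y : Om -> B) : Prop :=
  forall (SA : set A) (SB : set B), measurable SA -> measurable SB ->
    mu (X @^-1` SA `&` Y @^-1` SB) = (mu (X @^-1` SA) * mu (Y @^-1` SB))%E.

Definition eq_in_law (mu : probability Om R) (X Y : Om -> R) : Prop :=
  forall B : set R, measurable B -> mu (X @^-1` B) = mu (Y @^-1` B).

(* (1-beta)-type quantile: inf {u : mu(X <= u) >= beta}, in \bar R
   (inf of the empty set is +oo, of an unbounded-below set is -oo). *)
Definition quantile (mu : probability Om R) (X : Om -> R) (beta : R) : \bar R :=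
  ereal_inf [set u%:E | u in [set u : R | (beta%:E <= mu [set w | (X w <= u)%R])%E]].

(* Conditional c.d.f. of Uhat_n = g n (data) (xi n) given the data, where the
   auxiliary randomness xi n is independent of the data:
   P(Uhat_n <= u | V_1..V_n)(w) = mu{w' : g n (data n w) (xi n w') <= u}. *)
Definition cond_cdf (mu : probability Om R) (V : nat -> Om -> T)
    (g : forall n, n.-tuple T -> W -> R) (xi : nat -> Om -> W) (n : nat)
    (w : Om) (u : R) : \bar R :=
  mu [set w' | g n (data V n w) (xi n w') <= u].

Definition cond_quantile (mu : probability Om R) (V : nat -> Om -> T)
    (g : forall n, n.-tuple T -> W -> R) (xi : nat -> Om -> W) (n : nat)
    (beta : R) (w : Om) : \bar R :=
  ereal_inf [set u%:E | u in [set u : R | (beta%:E <= cond_cdf mu V g xi n w u)%E]].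

Definition supP (P0 : set (probability T R)) (F : probability T R -> \bar R)
  : \bar R := ereal_sup [set F P | P in P0].

Definition unif_op (P0 : set (probability T R)) (pr : probability T R -> probability Om R)
    (X : probability T R -> nat -> Om -> R) (b : nat -> R) : Prop :=
  (forall P, P0 P -> forall n, measurable_fun setT (X P n)) /\
  forall eps : R, 0 < eps ->
    limn_esup (fun n => supP P0 (fun P =>
      pr P [set w | eps * b n < `|X P n w|])) = 0%E.

End Defs.

(* Main.v *)
Require Import Defs.
From HB Require Import structures.
From mathcomp Require Import all_boot all_order all_algebra.
From mathcomp Require Import all_classical all_reals all_analysis.
From mathcomp Require Import measurable_realfun.
From mathcomp Require Import ring lra zify.
Set Implicit Arguments. Unset Strict Implicit. Unset Printing Implicit Defensive.
Import Order.TTheory GRing.Theory Num.Theory.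
Local Open Scope classical_set_scope.
Local Open Scope ring_scope.

Section Joint.
Context {R : realType} {dO d1 d2 : measure_display} {Om : measurableType dO}
  {T1 : measurableType d1} {T2 : measurableType d2}.
Local Open Scope ereal_scope.

Lemma joint_prod (mu : probability Om R) (X : Om -> T1) (Y : Om -> T2)
  (mX : measurable_fun setT X) (mY : measurable_fun setT Y)
  (Hind : forall A B, measurable A -> measurable B ->
     mu (X @^-1` A `&` Y @^-1` B) = mu (X @^-1` A) * mu (Y @^-1` B))
  (G : set (T1 * T2)) : measurable G ->
  mu [set w | G (X w, Y w)] =
  \int[distribution mu (mfun_Sub (mem_set mX : X \in mfun))]_x
     (distribution mu (mfun_Sub (mem_set mY : Y \in mfun)) (xsection G x)).
Proof.
move=> mG.
have mXY : measurable_fun setT (fun w => (X w, Y w)).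
  exact: measurable_fun_pair.
pose XY := mfun_Sub (mem_set mXY : (fun w => (X w, Y w)) \in mfun).
have := @product_measure_unique _ _ _ _ R
  (distribution mu (mfun_Sub (mem_set mX : X \in mfun)))
  (distribution mu (mfun_Sub (mem_set mY : Y \in mfun)))
  (distribution mu XY) _ G mG.
move=> H; transitivity (distribution mu XY G); first by [].
  by rewrite -H.
Qed.

Lemma joint_lower (mu : probability Om R) (X : Om -> T1) (Y : Om -> T2)
  (mX : measurable_fun setT X) (mY : measurable_fun setT Y)
  (Hind : forall A B, measurable A -> measurable B ->
     mu (X @^-1` A `&` Y @^-1` B) = mu (X @^-1` A) * mu (Y @^-1` B))
  (A : set T1) (G : set (T1 * T2)) (beta : R) :
  measurable A -> measurable G -> (0 <= beta)%R ->
  (forall x, A x -> beta%:E <= mu (Y @^-1` [set y | G (x, y)])) ->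
  beta%:E * mu (X @^-1` A) <= mu [set w | A (X w) /\ G (X w, Y w)].
Proof.
move=> mA mG b0 HA.
have mG' : measurable (G `&` (A `*` setT)) by apply: measurableI => //; exact: measurableX.
rewrite (_ : [set w | A (X w) /\ G (X w, Y w)] = [set w | (G `&` (A `*` setT)) (X w, Y w)]); last first.
  by apply/seteqP; split => w /=; tauto.
rewrite (joint_prod mX mY Hind mG').
set m1 := distribution _ _; set m2 := distribution _ _.
have -> : mu (X @^-1` A) = \int[m1]_x (\1_A x)%:E.
  by rewrite integral_indic // setIT.
rewrite -ge0_integralZl_EFin //; last first.
  by apply/measurable_EFinP; exact: measurable_indic.
apply: ge0_le_integral => //.
- by move=> x _; rewrite -EFinM lee_fin mulr_ge0.
- apply/measurable_EFinP; apply: measurable_funM => //; exact: measurable_indic.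
- exact: measurable_fun_xsection.
- move=> x _; rewrite indicE; case: (boolP (x \in A)) => xA.
  + rewrite /= mule1; apply: (le_trans (HA x (set_mem xA))).
    rewrite le_eqVlt; apply/orP; left; apply/eqP.
    rewrite /m2 /distribution /pushforward /=; congr (mu _).
    apply/seteqP; split => w; rewrite /xsection /= inE /=.
    * by move=> Gw; split => //; split => //; exact: set_mem.
    * by case.
  + by rewrite /= mule0 measure_ge0.

Qed.

Lemma joint_upper (mu : probability Om R) (X : Om -> T1) (Y : Om -> T2)
  (mX : measurable_fun setT X) (mY : measurable_fun setT Y)
  (Hind : forall A B, measurable A -> measurable B ->
     mu (X @^-1` A `&` Y @^-1` B) = mu (X @^-1` A) * mu (Y @^-1` B))
  (A : set T1) (G : set (T1 * T2)) (beta : R) :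
  measurable A -> measurable G -> (0 <= beta)%R ->
  (forall x, A x -> mu (Y @^-1` [set y | G (x, y)]) <= beta%:E) ->
  mu [set w | A (X w) /\ G (X w, Y w)] <= beta%:E * mu (X @^-1` A).
Proof.
move=> mA mG b0 HA.
have mG' : measurable (G `&` (A `*` setT)) by apply: measurableI => //; exact: measurableX.
rewrite (_ : [set w | A (X w) /\ G (X w, Y w)] = [set w | (G `&` (A `*` setT)) (X w, Y w)]); last first.
  by apply/seteqP; split => w /=; tauto.
rewrite (joint_prod mX mY Hind mG').
set m1 := distribution _ _; set m2 := distribution _ _.
have -> : mu (X @^-1` A) = \int[m1]_x (\1_A x)%:E.
  by rewrite integral_indic // setIT.
rewrite -ge0_integralZl_EFin //; last first.
  by apply/measurable_EFinP; exact: measurable_indic.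
apply: ge0_le_integral => //.
- exact: measurable_fun_xsection.
- apply/measurable_EFinP; apply: measurable_funM => //; exact: measurable_indic.
- move=> x _; rewrite indicE; case: (boolP (x \in A)) => xA.
  + rewrite /= mule1; apply: le_trans (HA x (set_mem xA)).
    rewrite le_eqVlt; apply/orP; left; apply/eqP.
    rewrite /m2 /distribution /pushforward /=; congr (mu _).
    apply/seteqP; split => w; rewrite /xsection /= inE /=.
    * by case.
    * by move=> Gw; split => //; split => //; exact: set_mem.
  + rewrite /= mule0 le_eqVlt; apply/orP; left; apply/eqP.
    rewrite /m2 /distribution /pushforward /=.
    rewrite (_ : _ @^-1` _ = set0) ?measure0 //.
    apply/seteqP; split => w //; rewrite /xsection /= inE /= => -[_ [Ax _]].
    by move: xA; rewrite (mem_set Ax).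
Qed.
End Joint.
Section Quant.
Context {R : realType}.
Local Open Scope ereal_scope.
Definition Qf (F : R -> \bar R) (b : R) : \bar R :=
  ereal_inf [set u%:E | u in [set u : R | b%:E <= F u]].

Variable F : R -> \bar R.
Hypothesis Fmono : forall x y : R, (x <= y)%R -> F x <= F y.

Lemma QL1 b x : Qf F b < x%:E -> b%:E <= F x.
Proof.
move=> /ereal_inf_lt [_ [u /= Hu <-]]; rewrite lte_fin => ux.
exact: le_trans Hu (Fmono (ltW ux)).
Qed.

Lemma QL1q b x : Qf F b < x%:E -> exists q : rat, (ratr q < x)%R /\ b%:E <= F (ratr q).
Proof.
move=> /ereal_inf_lt [_ [u /= Hu <-]]; rewrite lte_fin => ux.
have [q] := rat_in_itvoo ux; rewrite in_itv /= => /andP [uq qx].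
by exists q; split => //; exact: le_trans Hu (Fmono (ltW uq)).
Qed.

Lemma QL2 b x : b%:E <= F x -> Qf F b <= x%:E.
Proof. by move=> H; apply: ereal_inf_lbound; exists x. Qed.

Lemma Qfin b u l : b%:E <= F u -> F l < b%:E -> exists c : R, Qf F b = c%:E.
Proof.
move=> Hu Hl.
have H1 : Qf F b <= u%:E := QL2 Hu.
have H2 : l%:E <= Qf F b.
  apply: le_ereal_inf_tmp => _ [v /= Hv <-]; rewrite lee_fin.
  rewrite leNgt; apply/negP => vl.
  by move: (lt_le_trans Hl (le_trans Hv (Fmono (ltW vl)))); rewrite ltxx.
exists (fine (Qf F b)); rewrite fineK //.
by rewrite fin_numElt (lt_le_trans (ltNyr l) H2) (le_lt_trans H1 (ltry u)).
Qed.
End Quant.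

Section Cdf.
Context {R : realType} {d : measure_display} {Om : measurableType d}.
Local Open Scope ereal_scope.
Lemma cdf_hi (mu : probability Om R) (I : Om -> R) (mI : measurable_fun setT I) (b : R) :
  (b < 1)%R -> exists u, b%:E < mu [set w | (I w <= u)%R].
Proof.
move=> b1.
pose X := mfun_Sub (mem_set mI : I \in mfun).
have := @cvg_cdfy1 _ _ R mu X.
move=> /fine_cvgP [_ H].
have := @cvgr_gt _ _ _ _ _ _ H b b1.
move=> [M [_ HM]].
have /HM : (M < M + 1)%R by rewrite ltrDl.
move=> Hb; exists (M + 1)%R.
have fin : @cdf _ _ _ mu X (M + 1) \is a fin_num.
  exact: (@fin_num_measure _ _ _ (distribution mu X) _ (measurable_itv `]-oo, (M+1)%R])).
have Hb' : b%:E < @cdf _ _ _ mu X (M+1) by rewrite -(fineK fin) lte_fin.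
move: Hb'; rewrite /cdf /distribution /pushforward /=.
rewrite (_ : _ @^-1` _ = [set w | (I w <= M + 1)%R]) // .
Qed.

Lemma cdf_lo (mu : probability Om R) (I : Om -> R) (mI : measurable_fun setT I) (b : R) :
  (0 < b)%R -> exists u, mu [set w | (I w <= u)%R] < b%:E.
Proof.
move=> b0.
pose X := mfun_Sub (mem_set mI : I \in mfun).
have := @cvg_cdfNy0 _ _ R mu X.
move=> /fine_cvgP [_ H].
have := @cvgr_lt _ _ _ _ _ _ H b b0.
move=> [M [_ HM]].
have /HM : (M - 1 < M)%R by rewrite ltrBlDr ltrDl.
move=> Hb.
have fin : @cdf _ _ _ mu X (M - 1) \is a fin_num.
  exact: (@fin_num_measure _ _ _ (distribution mu X) _ (measurable_itv `]-oo, (M-1)%R])).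
exists (M - 1)%R.
have Hb' : @cdf _ _ _ mu X (M-1) < b%:E by rewrite -(fineK fin) lte_fin.
move: Hb'; rewrite /cdf /distribution /pushforward /=.
by rewrite (_ : _ @^-1` _ = [set w | (I w <= M - 1)%R]) // .
Qed.
End Cdf.
Section Pr.
Context {R : realType} {d : measure_display} {Om : measurableType d}.
Variable mu : probability Om R.
Definition Pr (A : set Om) : R := fine (mu A).

Lemma PrE A : measurable A -> mu A = (Pr A)%:E.
Proof. by move=> mA; rewrite /Pr fineK // fin_num_measure. Qed.

Lemma Pr_ge0 A : measurable A -> 0 <= Pr A.
Proof. by move=> mA; rewrite -lee_fin -PrE // measure_ge0. Qed.

Lemma Pr_le1 A : measurable A -> Pr A <= 1.
Proof. by move=> mA; rewrite -lee_fin -PrE // probability_le1. Qed.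

Lemma Pr_le A B : measurable A -> measurable B -> A `<=` B -> Pr A <= Pr B.
Proof. by move=> mA mB AB; rewrite -lee_fin -!PrE // le_measure // inE. Qed.

Lemma Pr_le2 A B C : measurable A -> measurable B -> measurable C ->
  A `<=` B `|` C -> Pr A <= Pr B + Pr C.
Proof.
move=> mA mB mC ABC.
rewrite -lee_fin EFinD -!PrE //.
apply: le_trans (measureU2 mu mB mC).
by rewrite le_measure // inE //; exact: measurableU.
Qed.

Lemma Pr_setC A : measurable A -> Pr (~` A) = 1 - Pr A.
Proof.
move=> mA; apply: EFin_inj; rewrite -PrE; last exact: measurableC.
by rewrite probability_setC // PrE.
Qed.

Lemma mle (Z : Om -> R) x : measurable_fun setT Z -> measurable [set w | Z w <= x].
Proof.
move=> mZ; have := mZ measurableT _ (measurable_itv `]-oo, x]).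
by rewrite setTI (_ : _ @^-1` _ = [set w | Z w <= x]) //; apply/seteqP; split => w; rewrite /= in_itv.
Qed.

Lemma mlt (Z : Om -> R) x : measurable_fun setT Z -> measurable [set w | x < Z w].
Proof.
move=> mZ; have := mZ measurableT _ (measurable_itv `]x, +oo[).
by rewrite setTI (_ : _ @^-1` _ = [set w | x < Z w]) //; apply/seteqP; split => w; rewrite /= in_itv /= andbT.
Qed.

Lemma mbtw (Z : Om -> R) x y : measurable_fun setT Z -> measurable [set w | x <= Z w <= y].
Proof.
move=> mZ; have := mZ measurableT _ (measurable_itv `[x, y]).
by rewrite setTI (_ : _ @^-1` _ = [set w | x <= Z w <= y]) //; apply/seteqP; split => w; rewrite /= in_itv.
Qed.

Lemma mabs (Z : Om -> R) x : measurable_fun setT Z -> measurable [set w | x < `|Z w|].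
Proof.
move=> mZ; apply: (mlt (Z := fun w => `|Z w|)).
apply: measurableT_comp => //; exact: normr_measurable.
Qed.

End Pr.

Section Core.
Context {R : realType} {dO dD dW : measure_display} {Om : measurableType dO}
  {Tp : measurableType dD} {W : measurableType dW}.
Variables (mu : probability Om R) (D : Om -> Tp) (xi : Om -> W) (gg : Tp -> W -> R)
  (I U Us Y1 Y2 : Om -> R) (alpha : R).
Hypotheses (mD : measurable_fun setT D) (mxi : measurable_fun setT xi)
  (mgg : measurable_fun setT (fun p : Tp * W => gg p.1 p.2))
  (mI : measurable_fun setT I) (mU : measurable_fun setT U)
  (mUs : measurable_fun setT Us) (mY1 : measurable_fun setT Y1)
  (mY2 : measurable_fun setT Y2).
Hypothesis indxi : forall A B, measurable A -> measurable B ->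
  mu (D @^-1` A `&` xi @^-1` B) = (mu (D @^-1` A) * mu (xi @^-1` B))%E.
Hypothesis indU : forall A (B : set R), measurable A -> measurable B ->
  mu (D @^-1` A `&` Us @^-1` B) = (mu (D @^-1` A) * mu (Us @^-1` B))%E.
Hypothesis lawU : forall B : set R, measurable B -> mu (Us @^-1` B) = mu (U @^-1` B).

Definition cdfh w u := mu [set w' | gg (D w) (xi w') <= u].
Definition chat w := Qf (cdfh w) (1 - alpha).

Lemma mgg2 d : measurable_fun setT (fun w' => gg d (xi w')).
Proof.
apply: (measurableT_comp (f := fun y => gg d y)) => //.
exact: (measurable_fun_pair2 (f := fun p : Tp * W => gg p.1 p.2)).
Qed.

Lemma cdfh_mono w : forall x y : R, x <= y -> (cdfh w x <= cdfh w y)%E.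
Proof.
move=> x y xy; rewrite /cdfh le_measure // ?inE.
- exact: (mle (Z := fun w' => gg (D w) (xi w')) x (mgg2 _)).
- exact: (mle (Z := fun w' => gg (D w) (xi w')) y (mgg2 _)).
- by move=> w' /= h; exact: le_trans h xy.
Qed.

Lemma hsec_meas (G : set (Tp * W)) : measurable G ->
  measurable_fun setT (fun d => mu (xi @^-1` [set y | G (d, y)])).
Proof.
move=> mG.
have := measurable_fun_xsection (distribution mu (mfun_Sub (mem_set mxi : xi \in mfun))) mG.
apply: eq_measurable_fun => d _ /=; rewrite /distribution /pushforward /xsection /=.
by congr (mu _); apply/seteqP; split => w /=; rewrite inE.
Qed.

Lemma mA_ge (t b : R) : measurable [set d | (b%:E <= mu (xi @^-1` [set y | (gg d y <= t)%R]))%E].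
Proof.
have mG : measurable [set p : Tp * W | gg p.1 p.2 <= t].
  exact: (mle (Z := fun p : Tp * W => gg p.1 p.2) t mgg).
have := measurable_lee measurableT (measurable_cst (b%:E)) (hsec_meas mG).
by rewrite setTI.
Qed.

Lemma mA_lt (t b : R) : measurable [set d | (mu (xi @^-1` [set y | (gg d y <= t)%R]) < b%:E)%E].
Proof.
have mG : measurable [set p : Tp * W | gg p.1 p.2 <= t].
  exact: (mle (Z := fun p : Tp * W => gg p.1 p.2) t mgg).
have := measurable_lte measurableT (hsec_meas mG) (measurable_cst (b%:E)).
by rewrite setTI.
Qed.

Lemma mchat : measurable [set w | (chat w < (I w)%:E)%E].
Proof.
have -> : [set w | (chat w < (I w)%:E)%E] = \bigcup_(q : rat)
   ([set w | ratr q < I w] `&` (D @^-1` [set d | ((1 - alpha)%:E <= mu (xi @^-1` [set y | (gg d y <= ratr q)%R]))%E])).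
  apply/seteqP; split => w /=.
  - move=> /(QL1q (cdfh_mono w)) [q [qI Hq]]; by exists q.
  - move=> [q _ [qI Hq]]; apply: le_lt_trans (QL2 Hq) _; by rewrite lte_fin.
apply: bigcupT_measurable_rat => q; apply: measurableI; first exact: mlt.
by rewrite -[X in measurable X]setTI; apply: mD => //; exact: mA_ge.
Qed.


Lemma cdfZ_mono (Z : Om -> R) : measurable_fun setT Z ->
  forall x y : R, x <= y -> (mu [set w | (Z w <= x)%R] <= mu [set w | (Z w <= y)%R])%E.
Proof.
move=> mZ x y xy; rewrite le_measure // ?inE; try exact: mle.
by move=> w /= h; exact: le_trans h xy.
Qed.

Lemma mggDxi : measurable_fun setT (fun w => gg (D w) (xi w)).
Proof.
exact: (measurableT_comp mgg (measurable_fun_pair mD mxi)).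
Qed.

Lemma mpre (A : set Tp) : measurable A -> measurable (D @^-1` A).
Proof. by move=> mA; rewrite -[X in measurable X]setTI; apply: mD. Qed.

Lemma PrU_ind (A : set Tp) x : measurable A ->
  Pr mu (D @^-1` A `&` Us @^-1` `]-oo, x]) = Pr mu (D @^-1` A) * Pr mu [set w | U w <= x].
Proof.
move=> mA.
have mUx : measurable [set w | U w <= x] by exact: mle.
have mUsx : measurable (Us @^-1` `]-oo, x]).
  by have := mUs measurableT (measurable_itv `]-oo, x]); rewrite setTI.
have mI1 : measurable (D @^-1` A `&` Us @^-1` `]-oo, x]).
  by apply: measurableI => //; exact: mpre.
apply: EFin_inj; rewrite EFinM -(PrE _ mI1) -(PrE _ (mpre mA)) -(PrE _ mUx).
rewrite indU. 2: exact: mA. 2: exact: (measurable_itv `]-oo, x]). idtac.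
rewrite lawU; last exact: (measurable_itv `]-oo, x]).
congr (_ * mu _)%E; apply/seteqP; split => w; by rewrite /= in_itv.
Qed.

Lemma core_upper (e eta c : R) :
  0 < e -> 0 < eta -> alpha < 1 ->
  Qf (fun x => mu [set w | I w <= x]) (1 - (alpha + 2 * eta)) = c%:E ->
  (forall w, I w <= U w + Y1 w) -> (forall w, Us w + Y2 w <= gg (D w) (xi w)) ->
  Pr mu [set w | e < `|Y1 w|] <= eta ->
  Pr mu [set w | (chat w < (I w)%:E)%E] <=
    Pr mu [set w | e < `|Y2 w|] / eta + (alpha + 2 * eta)
    + Pr mu [set w | c - 3 * e <= I w <= c + 3 * e].
Proof.
move=> e0 eta0 a1 Hc HI HU Hp.
set b := 1 - (alpha + 2 * eta).
have Fmono := cdfZ_mono mI.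
have F1 : b <= Pr mu [set w | I w <= c + e].
  rewrite -lee_fin -PrE; last exact: mle.
  by apply: (QL1 Fmono); rewrite Hc lte_fin ltrDl.
have F2 : Pr mu [set w | I w <= c - e] < b.
  rewrite ltNge; apply/negP => H.
  rewrite -lee_fin -PrE in H; last exact: mle.
  have := QL2 (F := fun x => mu [set w | (I w <= x)%R]) H; rewrite Hc lee_fin; lra.
set t := c - 3 * e.
set A := [set d | ((1 - alpha)%:E <= mu (xi @^-1` [set y | (gg d y <= t)%R]))%E].
have mA : measurable A := mA_ge t (1 - alpha).
have mDA := mpre mA.
set m := Pr mu (D @^-1` A).
set p := Pr mu [set w | e < `|Y1 w|].
set q := Pr mu [set w | e < `|Y2 w|].
set s := Pr mu [set w | c - 3 * e <= I w <= c + 3 * e].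
have m0 : 0 <= m by exact: Pr_ge0.
have E2 : Pr mu [set w | (chat w < (I w)%:E)%E] <= m + Pr mu [set w | t < I w].
  apply: Pr_le2 => //; [exact: mchat | exact: mlt |].
  move=> w /= H; case: (boolP (chat w < t%:E)%E) => h.
    by left; exact: (QL1 (cdfh_mono w) h).
  by right; rewrite -leNgt in h; rewrite -lte_fin; exact: le_lt_trans h H.
have E6 : Pr mu [set w | t < I w] <= (alpha + 2 * eta) + s.
  have E61 : Pr mu [set w | t < I w] <= Pr mu [set w | c + e < I w] + s.
    apply: Pr_le2 => //; [exact: mlt | exact: mlt | exact: mbtw |].
    move=> w /= h; case: (boolP (c + e < I w)) => h2; [by left|right].
    rewrite -leNgt in h2; apply/andP; split; rewrite /t in h; lra.
  have E62 : Pr mu [set w | c + e < I w] = 1 - Pr mu [set w | I w <= c + e].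
    rewrite -Pr_setC; last exact: mle.
    congr (Pr mu _); apply/seteqP; split => w /=; rewrite ltNge => /negP //.
  have F1b : 1 - (alpha + 2 * eta) <= Pr mu [set w | I w <= c + e] by exact: F1.
  lra.
have mG : measurable [set pp : Tp * W | gg pp.1 pp.2 <= t].
  exact: (mle (Z := fun pp : Tp * W => gg pp.1 pp.2) t mgg).
have E3 := joint_lower mD mxi indxi mA mG (beta := 1 - alpha) ltac:(lra) (fun x Ax => Ax).
have mAG : measurable [set w | A (D w) /\ gg (D w) (xi w) <= t].
  have := measurableI _ _ mDA (mle (Z := fun w => gg (D w) (xi w)) t mggDxi).
  by [].
rewrite (PrE _ mDA) (PrE _ mAG) -EFinM lee_fin in E3.
have E4 : Pr mu [set w | A (D w) /\ gg (D w) (xi w) <= t] <=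
    Pr mu (D @^-1` A `&` Us @^-1` `]-oo, t + e]) + q.
  apply: Pr_le2 => //; [| exact: mabs |].
    apply: measurableI => //.
    by have := mUs measurableT (measurable_itv `]-oo, (t + e)%R]); rewrite setTI.
  move=> w /= [Aw Gw]; case: (boolP (e < `|Y2 w|)) => h; [by right|left].
  rewrite -leNgt ler_norml in h; move/andP: h => [h1 h2].
  split => //; rewrite /= in_itv /=; have := HU w; lra.
rewrite PrU_ind // in E4.
have E5 : Pr mu [set w | U w <= t + e] <= Pr mu [set w | I w <= c - e] + p.
  apply: Pr_le2 => //; [exact: mle | exact: mle | exact: mabs |].
  move=> w /= h; case: (boolP (e < `|Y1 w|)) => h'; [by right|left].
  rewrite -leNgt ler_norml in h'; move/andP: h' => [h1 h2].
  have := HI w; rewrite /t in h; lra.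
have Hm : eta * m <= q.
  have HF : Pr mu [set w | U w <= t + e] <= 1 - alpha - eta.
    have Hp' : p <= eta := Hp.
    rewrite /b in F2; lra.
  have E3' : (1 - alpha) * m <= Pr mu [set w | A (D w) /\ gg (D w) (xi w) <= t] := E3.
  have E4' : Pr mu [set w | A (D w) /\ gg (D w) (xi w) <= t] <=
    m * Pr mu [set w | U w <= t + e] + q := E4.
  nra.
have Hm' : m <= q / eta by rewrite ler_pdivlMr //; lra.
lra.
Qed.


Lemma core_lower (e eta c : R) :
  0 < e -> 0 < eta -> alpha < 1 ->
  Qf (fun x => mu [set w | I w <= x]) (1 - (alpha - 2 * eta)) = c%:E ->
  (forall w, U w + Y1 w <= I w) -> (forall w, gg (D w) (xi w) <= Us w + Y2 w) ->
  Pr mu [set w | e < `|Y1 w|] <= eta ->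
  (alpha - 2 * eta) - Pr mu [set w | c - 3 * e <= I w <= c + 3 * e]
    - Pr mu [set w | e < `|Y2 w|] / eta
  <= Pr mu [set w | (chat w < (I w)%:E)%E].
Proof.
move=> e0 eta0 a1 Hc HI HU Hp.
set b := 1 - (alpha - 2 * eta).
have Fmono := cdfZ_mono mI.
have F1 : b <= Pr mu [set w | I w <= c + e].
  rewrite -lee_fin -PrE; last exact: mle.
  by apply: (QL1 Fmono); rewrite Hc lte_fin ltrDl.
have F2 : Pr mu [set w | I w <= c - e] < b.
  rewrite ltNge; apply/negP => H.
  rewrite -lee_fin -PrE in H; last exact: mle.
  have := QL2 (F := fun x => mu [set w | (I w <= x)%R]) H; rewrite Hc lee_fin; lra.
set t := c + 3 * e.
set A := [set d | (mu (xi @^-1` [set y | (gg d y <= t)%R]) < (1 - alpha)%:E)%E].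
have mA : measurable A := mA_lt t (1 - alpha).
have mDA := mpre mA.
set m := Pr mu (D @^-1` A).
set p := Pr mu [set w | e < `|Y1 w|].
set q := Pr mu [set w | e < `|Y2 w|].
set s := Pr mu [set w | c - 3 * e <= I w <= c + 3 * e].
have Hp' : p <= eta := Hp.
have m0 : 0 <= m by exact: Pr_ge0.
have E2 : Pr mu [set w | t < I w] <= Pr mu [set w | (chat w < (I w)%:E)%E] + m.
  apply: Pr_le2 => //; [exact: mlt | exact: mchat |].
  move=> w /= H; case: (boolP (mu (xi @^-1` [set y | (gg (D w) y <= t)%R]) < (1 - alpha)%:E)%E) => h.
    by right.
  left; rewrite -leNgt in h.
  by apply: le_lt_trans (QL2 (F := cdfh w) h) _; rewrite lte_fin.
have E6 : (alpha - 2 * eta) - s <= Pr mu [set w | t < I w].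
  have E61 : Pr mu [set w | I w <= t] <= Pr mu [set w | I w <= c - e] + s.
    apply: Pr_le2 => //; [exact: mle | exact: mle | exact: mbtw |].
    move=> w /= h; case: (boolP (I w <= c - e)) => h2; [by left|right].
    rewrite -ltNge in h2; apply/andP; split; rewrite /t in h; lra.
  have E62 : Pr mu [set w | t < I w] = 1 - Pr mu [set w | I w <= t].
    rewrite -Pr_setC; last exact: mle.
    congr (Pr mu _); apply/seteqP; split => w /=; rewrite ltNge => /negP //.
  have F2b : Pr mu [set w | I w <= c - e] < 1 - (alpha - 2 * eta) by exact: F2.
  lra.
have mG : measurable [set pp : Tp * W | gg pp.1 pp.2 <= t].
  exact: (mle (Z := fun pp : Tp * W => gg pp.1 pp.2) t mgg).
have E3 := joint_upper mD mxi indxi mA mG (beta := 1 - alpha) ltac:(lra) (fun x Ax => ltW Ax).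
have mAG : measurable [set w | A (D w) /\ gg (D w) (xi w) <= t].
  have := measurableI _ _ mDA (mle (Z := fun w => gg (D w) (xi w)) t mggDxi).
  by [].
rewrite (PrE _ mDA) (PrE _ mAG) -EFinM lee_fin in E3.
have E4 : Pr mu (D @^-1` A `&` Us @^-1` `]-oo, t - e]) <=
    Pr mu [set w | A (D w) /\ gg (D w) (xi w) <= t] + q.
  apply: Pr_le2 => //; [| exact: mabs |].
    apply: measurableI => //.
    by have := mUs measurableT (measurable_itv `]-oo, (t - e)%R]); rewrite setTI.
  move=> w /= [Aw Uw]; case: (boolP (e < `|Y2 w|)) => h; [by right|left].
  rewrite -leNgt ler_norml in h; move/andP: h => [h1 h2].
  move: Uw; rewrite /= in_itv /= => Uw.
  split => //; have := HU w; lra.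
rewrite PrU_ind // in E4.
have E5 : Pr mu [set w | I w <= c + e] <= Pr mu [set w | U w <= t - e] + p.
  apply: Pr_le2 => //; [exact: mle | exact: mle | exact: mabs |].
  move=> w /= h; case: (boolP (e < `|Y1 w|)) => h'; [by right|left].
  rewrite -leNgt ler_norml in h'; move/andP: h' => [h1 h2].
  have := HI w; rewrite /t; lra.
have Hm : eta * m <= q.
  have HF : 1 - alpha + eta <= Pr mu [set w | U w <= t - e].
    rewrite /b in F1; lra.
  have E3' : Pr mu [set w | A (D w) /\ gg (D w) (xi w) <= t] <= (1 - alpha) * m := E3.
  have E4' : m * Pr mu [set w | U w <= t - e] <=
    Pr mu [set w | A (D w) /\ gg (D w) (xi w) <= t] + q := E4.
  nra.
have Hm' : m <= q / eta by rewrite ler_pdivlMr //; lra.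
lra.
Qed.

End Core.
Section Gen.
Context {R : realType}.
Local Open Scope ereal_scope.
Implicit Types (u : (\bar R)^nat).

Lemma esup_le u (x : \bar R) :
  (exists N, forall n, (N <= n)%N -> u n <= x) -> limn_esup u <= x.
Proof.
move=> [N HN]; rewrite /limn_esup limf_esupE.
apply: ge_ereal_inf; exists (ereal_sup (u @` [set n | (N <= n)%N])).
  by exists [set n | (N <= n)%N] => //; exists N.
by apply: ge_ereal_sup => _ [n /= nN <-]; exact: HN.
Qed.

Lemma esup_ev u (x : \bar R) :
  limn_esup u < x -> exists N, forall n, (N <= n)%N -> u n < x.
Proof.
rewrite /limn_esup limf_esupE => /ereal_inf_lt [_ [V hV <-]] Hx.
have [N _ HN] := hV.
exists N => n nN; apply: le_lt_trans Hx.
by apply: ereal_sup_ubound; exists n => //; exact: HN.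
Qed.

Lemma esup_ge0 u : (forall n, 0 <= u n) -> 0 <= limn_esup u.
Proof.
move=> u0; rewrite limn_esup_lim.
apply: lime_ge; first exact: is_cvg_esups.
apply: nearW => n; apply: le_trans (u0 n) _.
by apply: ereal_sup_ubound; exists n => /=.
Qed.

Lemma r_ev (r : nat -> R) (eta : R) : r @ \oo --> 0%R -> (0 < eta)%R ->
  exists N, forall n, (N <= n)%N -> (r n <= eta)%R.
Proof.
move=> rc eta0.
have := @cvgr_lt _ _ _ _ _ _ rc eta eta0.
move=> [N _ HN]; exists N => n nN; exact/ltW/HN.
Qed.

Lemma le_eps (L : \bar R) (x : R) :
  (forall e : R, (0 < e)%R -> L <= (x + e)%:E) -> L <= x%:E.
Proof.
move=> H; apply/lee_addgt0Pr => e e0.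
by rewrite -EFinD; exact: H.
Qed.
End Gen.

Unset Implicit Arguments. Set Strict Implicit. Set Printing Implicit Defensive.

Theorem lemmaD6
  (R : realType) (dO dT dW : measure_display)
  (Om : measurableType dO) (T : measurableType dT) (W : measurableType dW)
  (P0 : set (probability T R))
  (pr : probability T R -> probability Om R)
  (V : nat -> Om -> T)
  (f : forall n, n.-tuple T -> R)
  (g : forall n, n.-tuple T -> W -> R)
  (xi : nat -> Om -> W)
  (alpha : R) (a : nat -> R)
  (Halpha : 0 < alpha < 1)
  (Ha : forall n, 0 < a n)
  (Hiid : forall P, P0 P -> iid_with_law (pr P) V P)
  (Hf : forall n, measurable_fun setT (f n))
  (Hg : forall n, measurable_fun setT (fun p : n.-tuple T * W => g n p.1 p.2))
  (Hxi : forall n, measurable_fun setT (xi n))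
  (Hxi_indep : forall P, P0 P -> forall n, indep (pr P) (xi n) (data V n))
  (Hanti : exists2 delta : R, 0 < delta &
     forall alt : R, alpha - delta <= alt <= alpha + delta ->
     exists2 r : nat -> R, r @ \oo --> 0 &
     forall (n : nat) (eps : R), 0 < eps ->
       (supP P0 (fun P => pr P
          [set w | quantile (pr P) (fun w' => f n (data V n w')) (1 - alt) - eps%:E
                     <= (f n (data V n w))%:E
                     <= quantile (pr P) (fun w' => f n (data V n w')) (1 - alt) + eps%:E])
        <= ((a n)^-1 * Num.min eps 1 + r n)%:E)%E) :
  (* (i) *)
  (forall U Ustar : probability T R -> nat -> Om -> R,
     (forall P, P0 P -> forall n, measurable_fun setT (U P n)) ->
     (forall P, P0 P -> forall n, measurable_fun setT (Ustar P n)) ->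
     (forall P, P0 P -> forall n, indep (pr P) (Ustar P n) (data V n)) ->
     (forall P, P0 P -> forall n, eq_in_law (pr P) (Ustar P n) (U P n)) ->
     (exists Y, unif_op P0 pr Y a /\
        forall P, P0 P -> forall n w, f n (data V n w) <= U P n w + Y P n w) ->
     (exists Y, unif_op P0 pr Y a /\
        forall P, P0 P -> forall n w, Ustar P n w + Y P n w <= g n (data V n w) (xi n w)) ->
     (limn_esup (fun n => supP P0 (fun P => pr P
        [set w | cond_quantile (pr P) V g xi n (1 - alpha) w < (f n (data V n w))%:E]))
      <= alpha%:E)%E)
  /\
  (* (ii) *)
  (forall U Ustar : probability T R -> nat -> Om -> R,
     (forall P, P0 P -> forall n, measurable_fun setT (U P n)) ->
     (forall P, P0 P -> forall n, measurable_fun setT (Ustar P n)) ->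
     (forall P, P0 P -> forall n, indep (pr P) (Ustar P n) (data V n)) ->
     (forall P, P0 P -> forall n, eq_in_law (pr P) (Ustar P n) (U P n)) ->
     (exists Y, unif_op P0 pr Y a /\
        forall P, P0 P -> forall n w, f n (data V n w) = U P n w + Y P n w) ->
     (exists Y, unif_op P0 pr Y a /\
        forall P, P0 P -> forall n w, g n (data V n w) (xi n w) = Ustar P n w + Y P n w) ->
     limn_esup (fun n => supP P0 (fun P => `| pr P
        [set w | cond_quantile (pr P) V g xi n (1 - alpha) w < (f n (data V n w))%:E]
        - alpha%:E |%E)) = 0%E).
Proof.
move: Hanti => [delta delta0 Hanti'].
have a1 : alpha < 1 by case/andP: Halpha.
have a0 : 0 < alpha by case/andP: Halpha.
have mData : forall P, P0 P -> forall n, measurable_fun setT (data V n).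
  move=> P HP n; have [mV _] := Hiid P HP.
  apply/measurable_fun_tnthP => i.
  have := mV i; apply: eq_measurable_fun => x _.
  by rewrite /data /= tnth_mktuple.
have UP : forall (eta : R) (r : nat -> R) (U Us Y Y' : probability T R -> nat -> Om -> R) n P,
  P0 P -> 0 < eta -> alpha + 2 * eta < 1 ->
  (forall eps : R, 0 < eps ->
       (supP P0 (fun P => pr P
          [set w | quantile (pr P) (fun w' => f n (data V n w')) (1 - (alpha + 2 * eta)) - eps%:E
                     <= (f n (data V n w))%:E
                     <= quantile (pr P) (fun w' => f n (data V n w')) (1 - (alpha + 2 * eta)) + eps%:E])
        <= ((a n)^-1 * Num.min eps 1 + r n)%:E)%E) ->
  measurable_fun setT (U P n) -> measurable_fun setT (Us P n) ->
  indep (pr P) (Us P n) (data V n) -> eq_in_law (pr P) (Us P n) (U P n) ->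
  measurable_fun setT (Y P n) -> measurable_fun setT (Y' P n) ->
  (forall w, f n (data V n w) <= U P n w + Y P n w) ->
  (forall w, Us P n w + Y' P n w <= g n (data V n w) (xi n w)) ->
  Pr (pr P) [set w | eta * a n < `|Y P n w|] <= eta ->
  Pr (pr P) [set w | eta * a n < `|Y' P n w|] <= eta * eta ->
  r n <= eta ->
  (pr P [set w | cond_quantile (pr P) V g xi n (1 - alpha) w < (f n (data V n w))%:E]
    <= (alpha + 7 * eta)%:E)%E.
  move=> eta r U Us Y Y' n P HP eta0 ae1 Hr mU mUs indU lawU mY mY' HI HU Hp Hq Hrn.
  have mD := mData P HP n.
  have mI : measurable_fun setT (fun w => f n (data V n w)) := measurableT_comp (Hf n) mD.
  have Fm := cdfZ_mono (pr P) mI.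
  have [u Hu] := cdf_hi (pr P) mI (b := 1 - (alpha + 2 * eta)) ltac:(lra).
  have [l Hl] := cdf_lo (pr P) mI (b := 1 - (alpha + 2 * eta)) ltac:(lra).
  have [c Hc] := Qfin Fm (ltW Hu) Hl.
  have indxi : forall A B, measurable A -> measurable B ->
      pr P (data V n @^-1` A `&` xi n @^-1` B) = (pr P (data V n @^-1` A) * pr P (xi n @^-1` B))%E.
    by move=> A B mA mB; rewrite setIC (Hxi_indep P HP n) // muleC.
  have indU' : forall A (B : set R), measurable A -> measurable B ->
      pr P (data V n @^-1` A `&` Us P n @^-1` B) = (pr P (data V n @^-1` A) * pr P (Us P n @^-1` B))%E.
    by move=> A B mA mB; rewrite setIC indU // muleC.
  have e0 : 0 < eta * a n by rewrite mulr_gt0.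
  have H := core_upper (alpha := alpha) mD (Hxi n) (Hg n) mI mU mUs mY mY' indxi indU' lawU e0 eta0 a1 Hc HI HU Hp.
  have e3 : 0 < 3 * (eta * a n) by rewrite mulr_gt0.
  have mS : measurable [set w | c - 3 * (eta * a n) <= f n (data V n w) <= c + 3 * (eta * a n)].
    exact: (mbtw (Z := fun w => f n (data V n w))).
  have H1 : (pr P [set w | quantile (pr P) (fun w' => f n (data V n w')) (1 - (alpha + 2 * eta)) - (3 * (eta * a n))%:E
                     <= (f n (data V n w))%:E
                     <= quantile (pr P) (fun w' => f n (data V n w')) (1 - (alpha + 2 * eta)) + (3 * (eta * a n))%:E]
        <= ((a n)^-1 * Num.min (3 * (eta * a n)) 1 + r n)%:E)%E.
    apply: le_trans (Hr _ e3); apply: ereal_sup_ubound; by exists P.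
  have Hq' : quantile (pr P) (fun w' => f n (data V n w')) (1 - (alpha + 2 * eta)) = c%:E := Hc.
  rewrite Hq' in H1.
  rewrite (_ : [set w | (c%:E - (3 * (eta * a n))%:E <= (f n (data V n w))%:E <= c%:E + (3 * (eta * a n))%:E)%E]
     = [set w | c - 3 * (eta * a n) <= f n (data V n w) <= c + 3 * (eta * a n)]) in H1; last first.
    by apply/seteqP; split => w /=; rewrite -!EFinB -EFinD !lee_fin.
  rewrite (PrE _ mS) lee_fin in H1.
  have Hmin : (a n)^-1 * Num.min (3 * (eta * a n)) 1 <= 3 * eta.
    have E : (a n)^-1 * (3 * (eta * a n)) = 3 * eta by field; rewrite gt_eqF.
    rewrite -E; apply: ler_wpM2l; first by rewrite invr_ge0 ltW.
    by rewrite ge_min lexx.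
  have Hq2 : Pr (pr P) [set w | eta * a n < `|Y' P n w|] / eta <= eta by rewrite ler_pdivrMr.
  apply: le_trans (_ : _ <= (Pr (pr P) [set w | (chat (pr P) (data V n) (xi n) (g n) alpha w < (f n (data V n w))%:E)%E])%:E)%E _.
    rewrite -PrE; first exact: lexx.
    exact: (mchat (pr P) (I := fun w => f n (data V n w)) alpha mD (Hxi n) (Hg n) mI).
  rewrite lee_fin; cbv beta in H; lra.
have LO : forall (eta : R) (r : nat -> R) (U Us Y Y' : probability T R -> nat -> Om -> R) n P,
  P0 P -> 0 < eta -> 0 < alpha - 2 * eta ->
  (forall eps : R, 0 < eps ->
       (supP P0 (fun P => pr P
          [set w | quantile (pr P) (fun w' => f n (data V n w')) (1 - (alpha - 2 * eta)) - eps%:E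
                     <= (f n (data V n w))%:E
                     <= quantile (pr P) (fun w' => f n (data V n w')) (1 - (alpha - 2 * eta)) + eps%:E])
        <= ((a n)^-1 * Num.min eps 1 + r n)%:E)%E) ->
  measurable_fun setT (U P n) -> measurable_fun setT (Us P n) ->
  indep (pr P) (Us P n) (data V n) -> eq_in_law (pr P) (Us P n) (U P n) ->
  measurable_fun setT (Y P n) -> measurable_fun setT (Y' P n) ->
  (forall w, U P n w + Y P n w <= f n (data V n w)) ->
  (forall w, g n (data V n w) (xi n w) <= Us P n w + Y' P n w) ->
  Pr (pr P) [set w | eta * a n < `|Y P n w|] <= eta ->
  Pr (pr P) [set w | eta * a n < `|Y' P n w|] <= eta * eta ->
  r n <= eta ->
  ((alpha - 7 * eta)%:E <=
    pr P [set w | cond_quantile (pr P) V g xi n (1 - alpha) w < (f n (data V n w))%:E])%E.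
  move=> eta r U Us Y Y' n P HP eta0 ae1 Hr mU mUs indU lawU mY mY' HI HU Hp Hq Hrn.
  have mD := mData P HP n.
  have mI : measurable_fun setT (fun w => f n (data V n w)) := measurableT_comp (Hf n) mD.
  have Fm := cdfZ_mono (pr P) mI.
  have [u Hu] := cdf_hi (pr P) mI (b := 1 - (alpha - 2 * eta)) ltac:(lra).
  have [l Hl] := cdf_lo (pr P) mI (b := 1 - (alpha - 2 * eta)) ltac:(lra).
  have [c Hc] := Qfin Fm (ltW Hu) Hl.
  have indxi : forall A B, measurable A -> measurable B ->
      pr P (data V n @^-1` A `&` xi n @^-1` B) = (pr P (data V n @^-1` A) * pr P (xi n @^-1` B))%E.
    by move=> A B mA mB; rewrite setIC (Hxi_indep P HP n) // muleC.
  have indU' : forall A (B : set R), measurable A -> measurable B ->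
      pr P (data V n @^-1` A `&` Us P n @^-1` B) = (pr P (data V n @^-1` A) * pr P (Us P n @^-1` B))%E.
    by move=> A B mA mB; rewrite setIC indU // muleC.
  have e0 : 0 < eta * a n by rewrite mulr_gt0.
  have H := core_lower (alpha := alpha) mD (Hxi n) (Hg n) mI mU mUs mY mY' indxi indU' lawU e0 eta0 a1 Hc HI HU Hp.
  have e3 : 0 < 3 * (eta * a n) by rewrite mulr_gt0.
  have mS : measurable [set w | c - 3 * (eta * a n) <= f n (data V n w) <= c + 3 * (eta * a n)].
    exact: (mbtw (Z := fun w => f n (data V n w))).
  have H1 : (pr P [set w | quantile (pr P) (fun w' => f n (data V n w')) (1 - (alpha - 2 * eta)) - (3 * (eta * a n))%:E
                     <= (f n (data V n w))%:E
                     <= quantile (pr P) (fun w' => f n (data V n w')) (1 - (alpha - 2 * eta)) + (3 * (eta * a n))%:E]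
        <= ((a n)^-1 * Num.min (3 * (eta * a n)) 1 + r n)%:E)%E.
    apply: le_trans (Hr _ e3); apply: ereal_sup_ubound; by exists P.
  have Hq' : quantile (pr P) (fun w' => f n (data V n w')) (1 - (alpha - 2 * eta)) = c%:E := Hc.
  rewrite Hq' in H1.
  rewrite (_ : [set w | (c%:E - (3 * (eta * a n))%:E <= (f n (data V n w))%:E <= c%:E + (3 * (eta * a n))%:E)%E]
     = [set w | c - 3 * (eta * a n) <= f n (data V n w) <= c + 3 * (eta * a n)]) in H1; last first.
    by apply/seteqP; split => w /=; rewrite -!EFinB -EFinD !lee_fin.
  rewrite (PrE _ mS) lee_fin in H1.
  have Hmin : (a n)^-1 * Num.min (3 * (eta * a n)) 1 <= 3 * eta.
    have E : (a n)^-1 * (3 * (eta * a n)) = 3 * eta by field; rewrite gt_eqF.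
    rewrite -E; apply: ler_wpM2l; first by rewrite invr_ge0 ltW.
    by rewrite ge_min lexx.
  have Hq2 : Pr (pr P) [set w | eta * a n < `|Y' P n w|] / eta <= eta by rewrite ler_pdivrMr.
  apply: (le_trans (y := (Pr (pr P) [set w | (chat (pr P) (data V n) (xi n) (g n) alpha w < (f n (data V n w))%:E)%E])%:E)).
    rewrite lee_fin; cbv beta in H; lra.
  rewrite -PrE; first exact: lexx.
  exact: (mchat (pr P) (I := fun w => f n (data V n w)) alpha mD (Hxi n) (Hg n) mI).
have supb : forall (F : probability T R -> \bar R) (x : \bar R) P, P0 P ->
    (supP P0 F < x)%E -> (F P < x)%E.
  move=> F x P HP Hs; apply: le_lt_trans Hs; apply: ereal_sup_ubound; by exists P.
have evY : forall (Y : probability T R -> nat -> Om -> R) (eta x : R), unif_op P0 pr Y a ->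
    0 < eta -> 0 < x -> exists N, forall n, (N <= n)%N -> forall P, P0 P ->
    Pr (pr P) [set w | eta * a n < `|Y P n w|] <= x.
  move=> Y eta x [mY Yop] eta0 x0.
  have [N HN] : exists N, forall n, (N <= n)%N ->
      (supP P0 (fun P => pr P [set w | (eta * a n < `|Y P n w|)%R]) < x%:E)%E.
    by apply: esup_ev; rewrite Yop // lte_fin.
  exists N => n nN P HP.
  have := supb _ _ P HP (HN n nN).
  rewrite (PrE _ (mabs _ (mY P HP n))) lte_fin => h; exact: ltW.
split.
- move=> U Us mU mUs indU lawU [Y [uY HY]] [Y' [uY' HY']].
  apply: le_eps => eps eps0.
  pose eta := Num.min (eps / 7) (Num.min (delta / 2) ((1 - alpha) / 4)).
  have eta0 : 0 < eta.
    rewrite /eta !lt_min !divr_gt0 //; lra.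
  have eta1 : eta <= eps / 7 by rewrite /eta ge_min lexx.
  have eta2 : eta <= delta / 2 by rewrite /eta ge_min; apply/orP; right; rewrite ge_min lexx.
  have eta3 : eta <= (1 - alpha) / 4.
    by rewrite /eta ge_min; apply/orP; right; rewrite ge_min lexx orbT.
  have [r rc Hr] := Hanti' (alpha + 2 * eta) ltac:(apply/andP; split; lra).
  have [N1 HN1] := r_ev rc eta0.
  have [N2 HN2] := evY Y eta eta uY eta0 eta0.
  have [N3 HN3] := evY Y' eta (eta * eta) uY' eta0 (mulr_gt0 eta0 eta0).
  apply: esup_le; exists (N1 + N2 + N3)%N => n nN.
  apply: ge_ereal_sup => _ [P HP <-].
  apply: le_trans (UP eta r U Us Y Y' n P HP eta0 ltac:(lra) (Hr n) (mU P HP n) (mUs P HP n)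
     (indU P HP n) (lawU P HP n) (uY.1 P HP n) (uY'.1 P HP n) (HY P HP n) (HY' P HP n)
     (HN2 n ltac:(lia) P HP) (HN3 n ltac:(lia) P HP) (HN1 n ltac:(lia))) _.
  rewrite lee_fin; lra.
- move=> U Us mU mUs indU lawU [Y [uY HY]] [Y' [uY' HY']].
  have [P1 HP1] : exists P, P0 P.
    case: (pselect (exists P, P0 P)) => // nP; exfalso.
    have := uY.2 1 ltr01.
    have : (limn_esup (fun n => supP P0 (fun P => pr P [set w | (1 * a n < `|Y P n w|)%R])) <= -oo)%E.
      apply: esup_le; exists 0%N => n _.
      apply: ge_ereal_sup => _ [P HP <-]; exfalso; apply: nP; by exists P.
    by move=> + h; rewrite h.
  apply/eqP; rewrite eq_le; apply/andP; split; last first.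
    apply: esup_ge0 => n; apply: le_trans (abse_ge0 _) _.
    apply: ereal_sup_ubound; by exists P1.
  apply: (le_eps (x := 0)) => eps eps0.
  pose eta := Num.min (eps / 7) (Num.min (delta / 2) (Num.min ((1 - alpha) / 4) (alpha / 4))).
  have eta0 : 0 < eta.
    rewrite /eta !lt_min !divr_gt0 //; lra.
  have eta1 : eta <= eps / 7 by rewrite /eta ge_min lexx.
  have eta2 : eta <= delta / 2 by rewrite /eta ge_min; apply/orP; right; rewrite ge_min lexx.
  have eta3 : eta <= (1 - alpha) / 4.
    by rewrite /eta ge_min; apply/orP; right; rewrite ge_min; apply/orP; right; rewrite ge_min lexx.
  have eta4 : eta <= alpha / 4.
    by rewrite /eta ge_min; apply/orP; right; rewrite ge_min; apply/orP; right; rewrite ge_min lexx orbT.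
  have [r rc Hr] := Hanti' (alpha + 2 * eta) ltac:(apply/andP; split; lra).
  have [r' rc' Hr'] := Hanti' (alpha - 2 * eta) ltac:(apply/andP; split; lra).
  have [N1 HN1] := r_ev rc eta0.
  have [N1' HN1'] := r_ev rc' eta0.
  have [N2 HN2] := evY Y eta eta uY eta0 eta0.
  have [N3 HN3] := evY Y' eta (eta * eta) uY' eta0 (mulr_gt0 eta0 eta0).
  apply: esup_le; exists (N1 + N1' + N2 + N3)%N => n nN.
  apply: ge_ereal_sup => _ [P HP <-].
  have l1 : alpha + 2 * eta < 1 by lra.
  have l2 : 0 < alpha - 2 * eta by lra.
  have n1 : (N1 <= n)%N by lia.
  have n1' : (N1' <= n)%N by lia.
  have n2 : (N2 <= n)%N by lia.
  have n3 : (N3 <= n)%N by lia.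
  have HYa : forall w, f n (data V n w) <= U P n w + Y P n w by move=> w; rewrite (HY P HP n w).
  have HYb : forall w, U P n w + Y P n w <= f n (data V n w) by move=> w; rewrite (HY P HP n w).
  have HYc : forall w, Us P n w + Y' P n w <= g n (data V n w) (xi n w) by move=> w; rewrite (HY' P HP n w).
  have HYd : forall w, g n (data V n w) (xi n w) <= Us P n w + Y' P n w by move=> w; rewrite (HY' P HP n w).
  have up := UP eta r U Us Y Y' n P HP eta0 l1 (Hr n) (mU P HP n) (mUs P HP n)
     (indU P HP n) (lawU P HP n) (uY.1 P HP n) (uY'.1 P HP n)
     HYa HYc (HN2 n n2 P HP) (HN3 n n3 P HP) (HN1 n n1).
  have lo := LO eta r' U Us Y Y' n P HP eta0 l2 (Hr' n) (mU P HP n) (mUs P HP n)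
     (indU P HP n) (lawU P HP n) (uY.1 P HP n) (uY'.1 P HP n)
     HYb HYd (HN2 n n2 P HP) (HN3 n n3 P HP) (HN1' n n1').
  have mS' : measurable [set w | (cond_quantile (pr P) V g xi n (1 - alpha) w < (f n (data V n w))%:E)%E].
    exact: (mchat (pr P) (I := fun w => f n (data V n w)) alpha (mData P HP n) (Hxi n) (Hg n)
              (measurableT_comp (Hf n) (mData P HP n))).
  rewrite (PrE _ mS') lee_fin in up.
  rewrite (PrE _ mS') lee_fin in lo.
  rewrite (PrE _ mS') -EFinB abse_EFin lee_fin ler_norml; apply/andP; split; lra.
Qed.
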